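(* For all integers $n\ge k\ge0$ and all complex $r$: (i) $S_{n,k}(0,0;r)=\binom nk r^{n-k}$; (ii) $S_{n,k}(1,1;r)=\binom nk r^{\underline{n-k}}$; (iii) $S_{n,k}(-1,1;r)=\binom nk (n+r-1)^{\underline{n-k}}$; (iv) $S_{n,k}(1,2;r)=\binom nk\,k!\,2^{-(n-k)}\sum_{j=0}^{n-k}\frac{(-r)^{\overline j}(-n+k)^{\overline j}}{j!\,\Gamma(2k-n+1+j)}2^j$, where $1/\Gamma$ vanishes at nonpositive integers (i.e. $\binom nk\frac{k!}{(2k-n)!}2^{-(n-k)}{}_2F_1(-r,-n+k;-n+2k+1\mid2)$ suitably regularized); (v) $S_{n,k}(-2,-1;r)=\binom nk\frac{(2n-k)!}{n!}2^{-(n-k)}\sum_{j=0}^{n-k}\frac{(r-1)^{\overline j}(-n+k)^{\overline j}}{j!\,(-2n+k)^{\overline j}}2^j$, the sum being interpreted as $1$ when $n=k=0$.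
   Context: Hsu–Shiue Stirling numbers $S_{n,k}(a,b;r)$: defined by $S_{0,0}=1$, $S_{n,k}=0$ if $n<0$, $k<0$ or $k>n$, and $S_{n+1,k+1}=[-an+b(k+1)+r]S_{n,k+1}+S_{n,k}$ for $n\ge0$, $k\in\mathbb Z$. $x^{\underline m}=x(x-1)\cdots(x-m+1)$, $x^{\overline m}=x(x+1)\cdots(x+m-1)$. *)

(* Defs.v *)
(* Complex numbers: any numClosedFieldType (covers C). *)
From mathcomp Require Import all_boot all_order all_algebra.
Set Implicit Arguments. Unset Strict Implicit. Unset Printing Implicit Defensive.
Import Order.TTheory GRing.Theory Num.Theory.
Local Open Scope ring_scope.

(* Hsu--Shiue Stirling numbers S_{n,k}(a,b;r), for n k : nat
   (negative indices give 0 by definition).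
   S_{0,k} = [k = 0];
   S_{n+1,k} = (-a n + b k + r) S_{n,k} + S_{n,k-1}  (S_{n,-1} = 0). *)
Fixpoint HS (C : numClosedFieldType) (a b r : C) (n k : nat) {struct n} : C :=
  match n with
  | 0 => (k == 0)%:R
  | n'.+1 => (- a * n'%:R + b * k%:R + r) * HS a b r n' k
             + match k with 0 => 0 | k'.+1 => HS a b r n' k' end
  end.

Definition ffall (C : numClosedFieldType) (x : C) (m : nat) : C :=
  \prod_(i < m) (x - i%:R).
Definition rfact (C : numClosedFieldType) (x : C) (m : nat) : C :=
  \prod_(i < m) (x + i%:R).

(* 1/Gamma(m) at an integer m: 0 if m <= 0, 1/(m-1)! otherwise. *)
Definition rgamma_int (C : numClosedFieldType) (m : int) : C :=
  if (0 < m)%R then ((`|m|%N.-1)`!%:R)^-1 else 0.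

(* Main.v *)
Require Import Defs.
From mathcomp Require Import all_boot all_order all_algebra.
From mathcomp Require Import zify ring lra.
Import Order.TTheory GRing.Theory Num.Theory.
Local Open Scope ring_scope.
Set Implicit Arguments. Unset Strict Implicit. Unset Printing Implicit Defensive.

Section S.
Variable C : numClosedFieldType.

Lemma ffallS (x : C) m : ffall x m.+1 = ffall x m * (x - m%:R).
Proof. by rewrite /ffall big_ord_recr. Qed.

Lemma ffallSl (x : C) m : ffall (x + 1) m.+1 = (x + 1) * ffall x m.
Proof.
rewrite /ffall big_ord_recl /= subr0; congr (_ * _).
by apply: eq_bigr => i _; rewrite /bump /= add1n -natr1; ring.
Qed.

Lemma rfactS (x : C) m : rfact x m.+1 = rfact x m * (x + m%:R).
Proof. by rewrite /rfact big_ord_recr. Qed.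

Lemma part_i (r : C) n k : HS 0 0 r n k = 'C(n, k)%:R * r ^+ (n - k).
Proof.
elim: n k => [|n IH] [|k]; rewrite [HS _ _ _ _ _]/=.
- by rewrite bin0 expr0 mulr1.
- by rewrite bin0n mul0r.
- rewrite IH !subn0 !bin0 exprS; ring.
rewrite !IH binS natrD.
have [hkn|hkn] := leqP k n.
  rewrite subSS.
  case: (ltnP k n) => hk.
    have -> : (n - k = (n - k.+1).+1)%N by lia.
    rewrite exprS; ring.
  have -> : k = n by lia.
  rewrite subnn bin_small ?ltnSn //; ring.
rewrite !bin_small; try lia; ring.
Qed.
Lemma part_ii (r : C) n k : HS 1 1 r n k = 'C(n, k)%:R * ffall r (n - k).
Proof.
elim: n k => [|n IH] [|k]; rewrite [HS _ _ _ _ _]/=.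
- by rewrite bin0 /ffall big_ord0 mulr1.
- by rewrite bin0n mul0r.
- by rewrite IH !subn0 !bin0 ffallS; ring.
rewrite !IH binS natrD.
have [hkn|hkn] := leqP k n.
  rewrite subSS.
  case: (ltnP k n) => hk.
    have -> : (n - k = (n - k.+1).+1)%N by lia.
    rewrite ffallS natrB // -natr1; ring.
  have -> : k = n by lia.
  rewrite subnn bin_small ?ltnSn //; ring.
rewrite !bin_small; try lia; ring.
Qed.

Lemma part_iii (r : C) n k :
  HS (-1) 1 r n k = 'C(n, k)%:R * ffall (n%:R + r - 1) (n - k).
Proof.
have E : forall m : nat, m.+1%:R + r - 1 = (m%:R + r - 1) + 1 :> C.
  by move=> m; rewrite -natr1; ring.
elim: n k => [|n IH] [|k]; rewrite [HS _ _ _ _ _]/=.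
- by rewrite bin0 /ffall big_ord0 mulr1.
- by rewrite bin0n mul0r.
- by rewrite IH !subn0 !bin0 E ffallSl; ring.
rewrite !IH binS natrD E.
have [hkn|hkn] := leqP k n.
  rewrite subSS.
  case: (ltnP k n) => hk.
    have -> : (n - k = (n - k.+1).+1)%N by lia.
    rewrite ffallSl ffallS.
    have B := mul_bin_left n k.
    have B' : k.+1%:R * 'C(n, k.+1)%:R = (n%:R - k%:R) * 'C(n, k)%:R :> C.
      by rewrite -natrB ?(ltnW hk) // -!natrM B.
    rewrite natrB // -!natr1.
    rewrite -natr1 in B'.
    set X := ffall _ _. set c1 := 'C(n, k.+1)%:R. set c0 := 'C(n,k)%:R.
    move: B'; rewrite -/c1 -/c0 => B'.
    apply/eqP; rewrite -subr_eq0; apply/eqP.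
    transitivity (X * ((k%:R + 1) * c1 - (n%:R - k%:R) * c0)); first ring.
    by rewrite B' subrr mulr0.
  have -> : k = n by lia.
  rewrite subnn bin_small ?ltnSn // /ffall !big_ord0; ring.
rewrite !bin_small; try lia; ring.
Qed.
Lemma sum_rec (c : nat -> nat -> C) (al be : nat -> nat -> nat -> C)
  (S : nat -> nat -> C) (H : nat -> nat -> nat -> C) :
  (forall k, S 0%N k = (k == 0%N)%:R) ->
  (forall n k, S n.+1 k = c n k * S n k + (if k is k'.+1 then S n k' else 0)) ->
  (forall k i, H 0%N k i = ((k == 0%N) && (i == 0%N))%:R) ->
  (forall n k i, (n < i)%N -> H n k i = 0) ->
  (forall n k i, H n.+1 k i = al n k i * H n k i
        + (if k is k'.+1 then H n k' i else 0)
        + (if i is i'.+1 then be n k i * H n k i' else 0)) ->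
  (forall n k i, al n k i + be n k i.+1 = c n k) ->
  forall n k, S n k = \sum_(i < n.+1) H n k i.
Proof.
move=> S0 SS H0 Hsupp HS' Hc n; elim: n => [|n IH] k.
  by rewrite big_ord1 S0 H0 andbT.
rewrite SS.
under eq_bigr => i _ do rewrite HS'.
rewrite !big_split /=.
rewrite [X in _ = _ + _ + X]big_ord_recl /= add0r.
under [X in _ = _ + _ + X]eq_bigr => i _ do rewrite /bump add0n add1n.
rewrite [X in _ = X + _ + _]big_ord_recr /= Hsupp // mulr0 addr0.
have -> : \sum_(i < n.+2) (if k is k'.+1 then H n k' i else 0)
        = if k is k'.+1 then S n k' else 0.
  case: k => [|k]; first by rewrite big1.
  by rewrite big_ord_recr /= Hsupp // addr0 IH.
rewrite [in RHS]addrAC; congr (_ + _).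
rewrite IH mulr_sumr -big_split /=.
by apply: eq_bigr => i _; rewrite -mulrDl Hc.
Qed.
Definition F4 (p s q : nat) : C :=
  (2 * p + s + q)`!%:R / (p`!%:R * s`!%:R * q`!%:R * 2 ^+ p).

Lemma fact_neq0 m : (m`!)%:R != 0 :> C.
Proof. by rewrite pnatr_eq0 -lt0n fact_gt0. Qed.
Lemma natS_neq0 m : (m.+1)%:R != 0 :> C.
Proof. by rewrite pnatr_eq0. Qed.
Lemma two_neq0 : 2 != 0 :> C.
Proof. by rewrite pnatr_eq0. Qed.
Lemma exp2_neq0 m : 2 ^+ m != 0 :> C.
Proof. by rewrite expf_neq0 // two_neq0. Qed.

Ltac nz := rewrite ?nat1r; repeat (apply/andP; split);
  rewrite ?mulf_neq0 ?fact_neq0 ?natS_neq0 ?exp2_neq0 ?two_neq0 ?expf_neq0 ?oppr_eq0 ?oner_eq0 //.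

Lemma M1 p s q : q%:R * F4 p s q
  = (2 * p + s + q)%:R * (if q is q'.+1 then F4 p s q' else 0).
Proof.
case: q => [|q]; first by rewrite mul0r mulr0.
rewrite /F4 addnS !factS !natrM.
field; nz.
Qed.

Lemma M2 p s q : s%:R * F4 p s q
  = (2 * p + s + q)%:R * (if s is s'.+1 then F4 p s' q else 0).
Proof.
case: s => [|s]; first by rewrite mul0r mulr0.
rewrite /F4 addnS addSn !factS !natrM.
field; nz.
Qed.

Lemma M3 p s q : (2 * p)%:R * F4 p s q
  = (2 * p + s + q)%:R * (if p is p'.+1 then s.+1%:R * F4 p' s.+1 q else 0).
Proof.
case: p => [|p]; first by rewrite muln0 mul0r mulr0.
rewrite /F4 mulnS add2n addnS !addSn !factS !natrM exprS.
field; nz.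
Qed.
Lemma F4_rec p s q : (0 < 2 * p + s + q)%N ->
  F4 p s q = (if q is q'.+1 then F4 p s q' else 0)
           + (if s is s'.+1 then F4 p s' q else 0)
           + (if p is p'.+1 then s.+1%:R * F4 p' s.+1 q else 0).
Proof.
move=> hN.
have hN' : (2 * p + s + q)%:R != 0 :> C by rewrite pnatr_eq0 -lt0n.
apply: (mulfI hN'); rewrite !mulrDr -M1 -M2 -M3 !natrD; ring.
Qed.

Definition H4 (r : C) n k i :=
  if ((i <= k) && (k + i <= n))%N then F4 i (k - i)%N (n - k - i)%N * ffall r (n - k - i)%N
  else 0.

Lemma H4_0 r n k i : ~~ ((i <= k) && (k + i <= n))%N -> H4 r n k i = 0.
Proof. by rewrite /H4 => /negbTE ->. Qed.

Lemma H4_T r n k i : (i <= k)%N -> (k + i <= n)%N ->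
  H4 r n k i = F4 i (k - i)%N (n - k - i)%N * ffall r (n - k - i)%N.
Proof. by rewrite /H4 => -> ->. Qed.

Lemma H4_rec r n k i : H4 r n.+1 k i =
  (r - (n%:R - k%:R - i%:R)) * H4 r n k i
  + (if k is k'.+1 then H4 r n k' i else 0)
  + (if i is i'.+1 then (k%:R - i%:R + 1) * H4 r n k i' else 0).
Proof.
have [hik|hik] := leqP i k; last first.
  rewrite (@H4_0 r n.+1 k i) ?(@H4_0 r n k i) ?mulr0 ?add0r; try lia.
  case: i hik => [|i] hik; first lia.
  have [e|ne] := eqVneq i k.
    rewrite e (_ : k%:R - k.+1%:R + 1 = 0 :> C) ?mul0r ?addr0; last by rewrite -natr1; ring.
    by case: k hik e => [|k] hik e //; rewrite H4_0 //; lia.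
  rewrite (@H4_0 r n k i) ?mulr0 ?addr0; last lia.
  by case: k hik ne => [|k] hik ne //; rewrite H4_0 //; lia.
have [hkn|hkn] := leqP (k + i) n.+1; last first.
  rewrite (@H4_0 r n.+1 k i) ?(@H4_0 r n k i) ?mulr0 ?add0r; try lia.
  case: k hik hkn => [|k] hik hkn; rewrite ?add0r ?H4_0 ?add0r; try lia;
  case: i hik hkn => [|i] hik hkn //; rewrite H4_0 ?mulr0 //; lia.
rewrite H4_T // F4_rec; last lia.
rewrite [in LHS]mulrDl [in LHS]mulrDl; congr (_ + _ + _).
- case E: (n.+1 - k - i)%N => [|q].
    by rewrite mul0r H4_0 ?mulr0 //; lia.
  rewrite H4_T; try lia.
  have -> : (n - k - i = q)%N by lia.
  have -> : (n%:R = k%:R + i%:R + q%:R :> C).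
    by rewrite -!natrD; congr (_%:R); lia.
  rewrite ffallS; ring.
- case E: (k - i)%N => [|s].
    by case: k hik hkn E => [|k] hik hkn E; rewrite ?mul0r // H4_0 //; lia.
  case: k hik hkn E => [|k] hik hkn E; first lia.
  rewrite H4_T; try lia.
  have -> : (k - i = s)%N by lia.
  by rewrite subSS.
- case: i hik hkn => [|i] hik hkn; first by rewrite mul0r.
  rewrite H4_T; try lia.
  have -> : (k - i = (k - i.+1).+1)%N by lia.
  have -> : (n - k - i = n.+1 - k - i.+1)%N by lia.
  rewrite -[(k - i.+1).+1%:R]natr1 natrB //; ring.
Qed.
Lemma rfactN2 (x y : C) j : rfact (- x) j * rfact (- y) j = ffall x j * ffall y j.
Proof.
elim: j => [|j IH]; first by rewrite /rfact /ffall !big_ord0.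
rewrite !rfactS !ffallS.
transitivity ((rfact (- x) j * rfact (- y) j) * ((x - j%:R) * (y - j%:R))); first ring.
by rewrite IH; ring.
Qed.

Lemma ffall_nat m j : ffall (m%:R : C) j = (m ^_ j)%:R.
Proof.
elim: j => [|j IH]; first by rewrite /ffall big_ord0.
rewrite ffallS ffactnSr natrM IH.
case: (leqP j m) => h; first by rewrite natrB.
by rewrite ffact_small // !mul0r.
Qed.

Lemma sum_trunc (F : nat -> C) m n : (m <= n)%N ->
  (forall i, (m < i)%N -> F i = 0) ->
  \sum_(i < n.+1) F i = \sum_(i < m.+1) F i.
Proof.
move=> hmn hF; rewrite (big_ord_widen _ F (_ : m.+1 <= n.+1)%N) // big_mkcond /=.
rewrite [RHS]big_mkcond /=.
by apply: eq_bigr => i _; case: ifP => // /negbT; rewrite -leqNgt => h; rewrite hF.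
Qed.

Lemma part_iv (r : C) n k : (k <= n)%N ->
  HS 1 2 r n k = 'C(n, k)%:R * k`!%:R * (2 ^+ (n - k))^-1 *
        \sum_(j < (n - k).+1)
          rfact (- r) j * rfact (- n%:R + k%:R) j / j`!%:R
          * rgamma_int C (2 * k%:Z - n%:Z + 1 + j%:Z) * 2 ^+ j.
Proof.
move=> hkn.
rewrite (@sum_rec (fun n k => - 1 * n%:R + 2 * k%:R + r)
   (fun n k i => r - (n%:R - k%:R - i%:R)) (fun n k i => k%:R - i%:R + 1)
   (fun n k => HS 1 2 r n k) (H4 r)) //.
2: { move=> k' i'; case: k' => [|k']; case: i' => [|i'] /=.
  - by rewrite H4_T // /F4 /ffall big_ord0 muln0 !addn0 !sub0n fact0 expr0 !mulr1 divr1.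
  all: by rewrite H4_0 //; lia. }
2: by move=> n' k' i' h; rewrite H4_0 //; lia.
2: exact: H4_rec.
2: by move=> n' k' i'; rewrite -natr1; ring.
rewrite (@sum_trunc _ (n - k)); last first.
  by move=> i hi; rewrite H4_0 //; lia.
  lia.
rewrite mulr_sumr (reindex_inj rev_ord_inj) /=.
apply: eq_bigr => i _; rewrite subSS.
have hi : (i <= n - k)%N by rewrite -ltnS.
set m := (n - k)%N.
have hn : n = (k + m)%N by rewrite /m; lia.
move: (nat_of_ord i) hi => j hj {i}.
have -> : (1 *- n + k%:R = - (m%:R) :> C) by rewrite hn natrD; ring.
rewrite rfactN2 ffall_nat.
have eC : 'C(n, k)%:R = n`!%:R / (k`!%:R * m`!%:R) :> C.
  by rewrite -(bin_fact hkn) -/m !natrM mulfK // mulf_neq0 // fact_neq0.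
have eF : (m ^_ j)%:R = m`!%:R / (m - j)`!%:R :> C.
  by rewrite -(ffact_fact hj) natrM mulfK // fact_neq0.
have e2 : 2 ^+ m = 2 ^+ (m - j) * 2 ^+ j :> C by rewrite -exprD subnK.
case: (leqP (m - j) k) => hik.
  rewrite H4_T; [|lia|lia].
  have -> : (n - k - (m - j) = j)%N by lia.
  have -> : (2 * k%:Z - n%:Z + 1 + j%:Z = (k - (m - j)).+1%:Z)%R by lia.
  rewrite /rgamma_int /= /F4.
  have -> : (2 * (m - j) + (k - (m - j)) + j = n)%N by lia.
  rewrite eC eF e2.
  field; nz.
rewrite H4_0; last lia.
rewrite /rgamma_int ifF; last by apply/negbTE; rewrite -leNgt; lia.
by rewrite !(mulr0, mul0r).
Qed.
Definition F5 (k i q : nat) : C :=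
  (k + 2 * i + q)`!%:R / (k`!%:R * i`!%:R * q`!%:R * 2 ^+ i).

Lemma N1 k i q : q%:R * F5 k i q
  = (k + 2 * i + q)%:R * (if q is q'.+1 then F5 k i q' else 0).
Proof.
case: q => [|q]; first by rewrite mul0r mulr0.
rewrite /F5 addnS !factS !natrM.
field; nz.
Qed.

Lemma N2 k i q : k%:R * F5 k i q
  = (k + 2 * i + q)%:R * (if k is k'.+1 then F5 k' i q else 0).
Proof.
case: k => [|k]; first by rewrite mul0r mulr0.
rewrite /F5 !addSn !factS !natrM.
field; nz.
Qed.

Lemma N3 k i q : (2 * i)%:R * F5 k i q
  = (k + 2 * i + q)%:R *
    (if i is i'.+1 then (k + 2 * i' + q).+1%:R * F5 k i' q else 0).
Proof.
case: i => [|i]; first by rewrite muln0 mul0r mulr0.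
rewrite /F5 mulnS add2n !addnS !addSn !factS !natrM exprS.
field; nz.
Qed.

Lemma F5_rec k i q : (0 < k + 2 * i + q)%N ->
  F5 k i q = (if q is q'.+1 then F5 k i q' else 0)
           + (if k is k'.+1 then F5 k' i q else 0)
           + (if i is i'.+1 then (k + 2 * i' + q).+1%:R * F5 k i' q else 0).
Proof.
move=> hN.
have hN' : (k + 2 * i + q)%:R != 0 :> C by rewrite pnatr_eq0 -lt0n.
apply: (mulfI hN'); rewrite !mulrDr -N1 -N2 -N3 !natrD; ring.
Qed.

Definition H5 (r : C) n k i :=
  if (k + i <= n)%N then F5 k i (n - k - i)%N * rfact (r - 1) (n - k - i)%N
  else 0.

Lemma H5_0 r n k i : (n < k + i)%N -> H5 r n k i = 0.
Proof. by rewrite /H5 ltnNge => /negbTE ->. Qed.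

Lemma H5_T r n k i : (k + i <= n)%N ->
  H5 r n k i = F5 k i (n - k - i)%N * rfact (r - 1) (n - k - i)%N.
Proof. by rewrite /H5 => ->. Qed.

Lemma H5_rec r n k i : H5 r n.+1 k i =
  (n%:R - k%:R - i%:R + r - 1) * H5 r n k i
  + (if k is k'.+1 then H5 r n k' i else 0)
  + (if i is i'.+1 then (n%:R + i%:R) * H5 r n k i' else 0).
Proof.
have [hkn|hkn] := leqP (k + i) n.+1; last first.
  rewrite !H5_0 ?mulr0 ?add0r; try lia.
  case: k hkn => [|k] hkn; rewrite ?add0r ?H5_0 ?add0r; try lia;
  case: i hkn => [|i] hkn //; rewrite H5_0 ?mulr0 //; lia.
rewrite H5_T // F5_rec; last lia.
rewrite [in LHS]mulrDl [in LHS]mulrDl; congr (_ + _ + _).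
- case E: (n.+1 - k - i)%N => [|q].
    by rewrite mul0r H5_0 ?mulr0 //; lia.
  rewrite H5_T; try lia.
  have -> : (n - k - i = q)%N by lia.
  have -> : (n%:R = k%:R + i%:R + q%:R :> C).
    by rewrite -!natrD; congr (_%:R); lia.
  rewrite rfactS; ring.
- case: k hkn => [|k] hkn; first by rewrite mul0r.
  rewrite H5_T; try lia.
  by rewrite subSS.
- case: i hkn => [|i] hkn; first by rewrite mul0r.
  rewrite H5_T; try lia.
  have -> : (n - k - i = n.+1 - k - i.+1)%N by lia.
  have -> : ((k + 2 * i + (n.+1 - k - i.+1)).+1 = n + i.+1)%N by lia.
  rewrite natrD; ring.
Qed.
Lemma rfactN (x : C) j : rfact (- x) j = (-1) ^+ j * ffall x j.
Proof.
elim: j => [|j IH]; first by rewrite /rfact /ffall !big_ord0 expr0 mulr1.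
by rewrite rfactS ffallS IH exprS; ring.
Qed.

Lemma part_v (r : C) n k : (k <= n)%N ->
  HS (-2) (-1) r n k = 'C(n, k)%:R * ((2 * n - k)`!%:R / n`!%:R)
        * (2 ^+ (n - k))^-1 *
        \sum_(j < (n - k).+1)
          rfact (r - 1) j * rfact (- n%:R + k%:R) j
          / (j`!%:R * rfact (- (2 * n)%:R + k%:R) j) * 2 ^+ j.
Proof.
move=> hkn.
rewrite (@sum_rec (fun n k => - (-2) * n%:R + (-1) * k%:R + r)
   (fun n k i => n%:R - k%:R - i%:R + r - 1) (fun n k i => n%:R + i%:R)
   (fun n k => HS (-2) (-1) r n k) (H5 r)) //.
2: { move=> k' i'; case: k' => [|k']; case: i' => [|i'] /=.
  - by rewrite H5_T // /F5 /rfact big_ord0 muln0 !addn0 !sub0n fact0 expr0 !mulr1 divr1.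
  all: by rewrite H5_0 //; lia. }
2: by move=> n' k' i' h; rewrite H5_0 //; lia.
2: exact: H5_rec.
2: by move=> n' k' i'; rewrite -natr1; ring.
rewrite (@sum_trunc _ (n - k)); last first.
  by move=> i hi; rewrite H5_0 //; lia.
  lia.
rewrite mulr_sumr (reindex_inj rev_ord_inj) /=.
apply: eq_bigr => i _; rewrite subSS.
have hi : (i <= n - k)%N by rewrite -ltnS.
set m := (n - k)%N.
have hn : n = (k + m)%N by rewrite /m; lia.
move: (nat_of_ord i) hi => j hj {i}.
have -> : (- n%:R + k%:R = - (m%:R) :> C) by rewrite hn natrD; ring.
have -> : (- (2 * n)%:R + k%:R = - ((2 * n - k)%N%:R) :> C).
  by rewrite natrB; [ring | lia].
rewrite !rfactN !ffall_nat.
have eC : 'C(n, k)%:R = n`!%:R / (k`!%:R * m`!%:R) :> C.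
  by rewrite -(bin_fact hkn) -/m !natrM mulfK // mulf_neq0 // fact_neq0.
have eF : (m ^_ j)%:R = m`!%:R / (m - j)`!%:R :> C.
  by rewrite -(ffact_fact hj) natrM mulfK // fact_neq0.
have hj2 : (j <= 2 * n - k)%N by lia.
have eF2 : ((2 * n - k) ^_ j)%:R = (2 * n - k)`!%:R / (n + (m - j))`!%:R :> C.
  have -> : (n + (m - j) = 2 * n - k - j)%N by lia.
  by rewrite -(ffact_fact hj2) natrM mulfK // fact_neq0.
have e2 : 2 ^+ m = 2 ^+ (m - j) * 2 ^+ j :> C by rewrite -exprD subnK.
rewrite H5_T; last lia.
have -> : (n - k - (m - j) = j)%N by lia.
rewrite /F5.
have -> : (k + 2 * (m - j) + j = n + (m - j))%N by lia.
rewrite eC eF eF2 e2.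
field; nz.
Qed.
End S.

Unset Implicit Arguments.

Theorem mainTheorem14 (C : numClosedFieldType) (n k : nat) (r : C) :
  (k <= n)%N ->
  [/\ HS 0 0 r n k = 'C(n, k)%:R * r ^+ (n - k),
      HS 1 1 r n k = 'C(n, k)%:R * ffall r (n - k),
      HS (-1) 1 r n k = 'C(n, k)%:R * ffall (n%:R + r - 1) (n - k),
      HS 1 2 r n k = 'C(n, k)%:R * k`!%:R * (2 ^+ (n - k))^-1 *
        \sum_(j < (n - k).+1)
          rfact (- r) j * rfact (- n%:R + k%:R) j / j`!%:R
          * rgamma_int C (2 * k%:Z - n%:Z + 1 + j%:Z) * 2 ^+ j
    & HS (-2) (-1) r n k = 'C(n, k)%:R * ((2 * n - k)`!%:R / n`!%:R)
        * (2 ^+ (n - k))^-1 *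
        \sum_(j < (n - k).+1)
          rfact (r - 1) j * rfact (- n%:R + k%:R) j
          / (j`!%:R * rfact (- (2 * n)%:R + k%:R) j) * 2 ^+ j].
Proof.
move=> hkn; split.
- exact: part_i.
- exact: part_ii.
- exact: part_iii.
- exact: part_iv.
- exact: part_v.
Qed.
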